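(* Let $G$ be an arbitrary directed graph on $\{D\}\cup[n]$ (no connectivity assumption). Run the SNEAK communication protocol on $G$. For every set $J\subseteq[n]$ with $|J|\le k-1$, the collection of all data received by the participants in $J$ during the protocol is statistically independent of the secret $\mathbf s$ (for any distribution of $\mathbf s$). In particular, the collection $(\psi_j^TM)_{j\in J}$ is independent of $\mathbf s$.
   Context: Fix integers $n\ge k\ge 2$ and $d\ge k$, and a finite field $\mathbb{F}_q$ with $q>n$ (the integers $1,\dots,n$ are regarded as distinct elements of $\mathbb{F}_q$). For $i\in[n]=\{1,\dots,n\}$ let $\psi_i=(1,i,i^2,\dots,i^{d-1})^T\in\mathbb{F}_q^d$. The secret is $\mathbf s=(s_1,\dots,s_{d-k+1})\in\mathbb{F}_q^{d-k+1}$; write $s_A=s_{d-k+1}\in\mathbb{F}_q$ and $s_B=(s_1,\dots,s_{d-k})^T\in\mathbb{F}_q^{d-k}$. The dealer forms the symmetric $d\times d$ matrix $$M=\begin{pmatrix} s_A & r_a^T & s_B^T\\ r_a & R_b & R_c^T\\ s_B & R_c & 0\end{pmatrix}$$ with row/column blocks of sizes $1,\,k-1,\,d-k$, where $r_a\in\mathbb{F}_q^{k-1}$, $R_b$ is a symmetric $(k-1)\times(k-1)$ matrix, $R_c$ is a $(d-k)\times(k-1)$ matrix, and $0$ is the $(d-k)\times(d-k)$ zero matrix; the $R=(k-1)d-\binom{k-1}{2}$ free entries of $r_a,R_b,R_c$ (for $R_b$: the entries on and above the diagonal) are independent, uniform on $\mathbb{F}_q$, and independent of $\mathbf s$. The share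 of participant $j$ is $t_j^T=\psi_j^T N$, where $N=\begin{pmatrix} s_A & s_B^T\\ r_a & R_c^T\\ s_B & 0\end{pmatrix}$ is the $d\times(d-k+1)$ matrix formed by the first column and the last $d-k$ columns of $M$. Network: $G$ is a directed graph on $\{D\}\cup[n]$ ($D$ the dealer; an undirected edge counts as two directed edges); $\mathcal N(D)$ is the set of out-neighbours of $D$. SNEAK communication protocol: (i) the dealer sends the vector $\psi_j^TM$ to each $j\in\mathcal N(D)$; (ii) each participant $\ell\in\mathcal N(D)$, upon receiving $\psi_\ell^TM$, sends the scalar $\psi_\ell^TM\psi_j$ to each out-neighbour $j$; (iii) each participant $\ell\notin\mathcal N(D)$ waits until it has received one scalar from each of some $d$ distinct in-neighbours $i_1,\dots,i_d$, with values $\sigma_1,\dots,\sigma_d$ (extra received values are discarded), computes $v=V^{-1}(\sigma_1,\dots,\sigma_d)^T$ where $V$ is the $d\times d$ matrix with rows $\psi_{i_1}^T,\dots,\psi_{i_d}^T$, and sends the scalar $v^T\psi_i$ to each out-neighbour $i$ from which it did not receive data. *)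

(* Defs.v *)
From HB Require Import structures.
From mathcomp Require Import all_boot all_order all_algebra.
Set Implicit Arguments. Unset Strict Implicit. Unset Printing Implicit Defensive.
Import GRing.Theory.
Local Open Scope ring_scope.

Definition mget (F : nzRingType) (m p : nat) (A : 'M[F]_(m, p)) (i j : nat) : F :=
  match (insub i : option 'I_m), (insub j : option 'I_p) with
  | Some i', Some j' => A i' j'
  | _, _ => 0
  end.

Section SNEAK.
Variable F : finFieldType.
Variables (n k d : nat).
(* alpha i : the field element that "participant i" is identified with
   (the paper's integer i+1 regarded as an element of F_q). *)
Variable alpha : 'I_n -> F.

(* The randomness: r_a, the matrix whose on-and-above-diagonal entries are
   the free entries of R_b (entries strictly below the diagonal are unused),
   and R_c. *)
Notation randT := ('cV[F]_(k - 1) * 'M[F]_(k - 1) * 'M[F]_(d - k, k - 1))%type.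

(* Secret s = (s_1, ..., s_{d-k+1}) stored 0-based: s_B = entries 0..d-k-1,
   s_A = entry d-k. *)
Definition Mupper (s : 'rV[F]_(d - k + 1)) (r : randT) (i j : nat) : F :=
  let: (ra, Rb, Rc) := r in
  if i == 0%N then
    if j == 0%N then mget s 0 (d - k)
    else if (j < k)%N then mget ra j.-1 0             (* r_a^T *)
    else mget s 0 (j - k)                         (* s_B^T *)
  else if (i < k)%N then
    if (j < k)%N then mget Rb i.-1 j.-1               (* R_b (upper part) *)
    else mget Rc (j - k) i.-1                     (* R_c^T *)
  else 0.

Definition Mmat (s : 'rV[F]_(d - k + 1)) (r : randT) : 'M[F]_d :=
  \matrix_(i < d, j < d)
     (if (i <= j)%N then Mupper s r i j else Mupper s r j i).

Definition psi (i : 'I_n) : 'cV[F]_d := \col_(c < d) (alpha i ^+ c).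

(* Nodes: None = dealer D, Some i = participant i. *)
Definition payload := ('rV[F]_d + F)%type.

Record state := State {
  ddel  : 'I_n -> bool;                   (* dealer's message to j delivered *)
  msg   : 'I_n -> 'I_n -> option F;       (* scalar sent by a to b, if any *)
  del   : 'I_n -> 'I_n -> bool;           (* that scalar has been delivered *)
  recv  : 'I_n -> seq (option 'I_n * payload); (* everything received, in order *)
  fired : 'I_n -> bool                    (* participant has already sent *)
}.

Definition init_state : state :=
  State (fun _ => false) (fun _ _ => None) (fun _ _ => false)
        (fun _ => [::]) (fun _ => false).

Definition scalars_of (l : seq (option 'I_n * payload)) : seq ('I_n * F) :=
  pmap (fun e => match e with (Some a, inr x) => Some (a, x) | _ => None end) l.

Definition dvec_of (l : seq (option 'I_n * payload)) : option 'rV[F]_d :=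
  ohead (pmap (fun e => match e with (None, inl w) => Some w | _ => None end) l).

(* Step (iii): from the first d received scalars, v = V^{-1} sigma. *)
Definition reconstruct (l : seq (option 'I_n * payload)) : 'cV[F]_d :=
  let L := map Some (take d (scalars_of l)) in
  let V := \matrix_(t < d, c < d)
            (match nth None L t with Some (a, _) => alpha a ^+ c | None => 0 end) in
  let sigma := \col_(t < d)
            (match nth None L t with Some (_, x) => x | None => 0 end) in
  invmx V *m sigma.

Variable G : rel (option 'I_n).
Definition inND (j : 'I_n) : bool := G None (Some j).

Definition react (st : state) (b : 'I_n) : state :=
  let l := recv st b in
  if fired st b then st else
  if inND b then
    match dvec_of l with
    | Some w =>
        State (ddel st)
          (fun a j => if (a == b) && G (Some b) (Some j)
                      then Some ((w *m psi j) 0 0) else msg st a j)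
          (del st) (recv st) (fun a => (a == b) || fired st a)
    | None => st
    end
  else if (d <= size (scalars_of l))%N then
    let v := reconstruct l in
    let senders := map fst (scalars_of l) in
    State (ddel st)
      (fun a i => if [&& a == b, G (Some b) (Some i) & i \notin senders]
                  then Some ((v^T *m psi i) 0 0) else msg st a i)
      (del st) (recv st) (fun a => (a == b) || fired st a)
  else st.

Definition deliver (st : state) (b : 'I_n) (e : option 'I_n * payload)
    (dd : 'I_n -> bool) (dl : 'I_n -> 'I_n -> bool) : state :=
  react (State dd (msg st) dl
           (fun j => if j == b then rcons (recv st j) e else recv st j)
           (fired st)) b.

(* One scheduling event: delivery of the (pending) message on edge src -> dst;
   a no-op if there is no such undelivered message. *)
Definition step (s : 'rV[F]_(d - k + 1)) (r : randT) (st : state)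
    (ev : option 'I_n * 'I_n) : state :=
  let: (src, dst) := ev in
  match src with
  | None =>
      if inND dst && ~~ ddel st dst then
        deliver st dst (None, inl ((psi dst)^T *m Mmat s r))
          (fun j => (j == dst) || ddel st j) (del st)
      else st
  | Some a =>
      match msg st a dst with
      | Some x =>
          if ~~ del st a dst then
            deliver st dst (Some a, inr x) (ddel st)
              (fun a' b' => ((a' == a) && (b' == dst)) || del st a' b')
          else st
      | None => st
      end
  end.

Definition run (s : 'rV[F]_(d - k + 1)) (r : randT)
    (sched : seq (option 'I_n * 'I_n)) : state :=
  foldl (step s r) init_state sched.

Definition view (J : {set 'I_n}) (s : 'rV[F]_(d - k + 1)) (r : randT)
    (sched : seq (option 'I_n * 'I_n)) : seq (seq (option 'I_n * payload)) :=
  [seq recv (run s r sched) j | j <- enum J].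

End SNEAK.

Definition share_view (F : finFieldType) (n k d : nat) (alpha : 'I_n -> F)
    (J : {set 'I_n}) (s : 'rV[F]_(d - k + 1))
    (r : 'cV[F]_(k - 1) * 'M[F]_(k - 1) * 'M[F]_(d - k, k - 1)) : seq 'rV[F]_d :=
  [seq (psi d alpha j)^T *m Mmat s r | j <- enum J].

(* Main.v *)
Require Import Defs.
From HB Require Import structures.
From mathcomp Require Import all_boot all_order all_algebra.
From mathcomp Require Import ring zify.
Set Implicit Arguments. Unset Strict Implicit. Unset Printing Implicit Defensive.
Import GRing.Theory.
Local Open Scope ring_scope.

Lemma mget_add (F : nzRingType) m p (A B : 'M[F]_(m, p)) i j :
  mget (A + B) i j = mget A i j + mget B i j.
Proof. rewrite /mget; case: (insub i : option 'I_m) => [i0|]; case: (insub j : option 'I_p) => [j0|] //=; by rewrite ?mxE ?addr0. Qed.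

Lemma mget_in (F : nzRingType) m p (A : 'M[F]_(m, p)) i j (hi : (i < m)%N) (hj : (j < p)%N) :
  mget A i j = A (Ordinal hi) (Ordinal hj).
Proof. rewrite /mget. case: insubP => [i' _ ei|]; last by rewrite hi.
case: insubP => [j' _ ej|]; last by rewrite hj.
by congr (A _ _); apply: val_inj. Qed.

Section Lin.
Variables (F : finFieldType) (k d : nat).
Notation randT := ('cV[F]_(k - 1) * 'M[F]_(k - 1) * 'M[F]_(d - k, k - 1))%type.

Lemma Mupper_add (s s' : 'rV[F]_(d - k + 1)) (r r' : randT) i j :
  Mupper (s + s') (r + r') i j = Mupper s r i j + Mupper s' r' i j.
Proof.
case: r => [[ra Rb] Rc]; case: r' => [[ra' Rb'] Rc'].
rewrite /Mupper /=.
by do !case: ifP => _; rewrite ?mget_add ?addr0.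
Qed.

Lemma Mmat_add (s s' : 'rV[F]_(d - k + 1)) (r r' : randT) :
  Mmat (s + s') (r + r') = Mmat s r + Mmat s' r'.
Proof. by apply/matrixP => i j; rewrite !mxE; case: ifP => _; rewrite Mupper_add. Qed.

Lemma Mmat_sym (s : 'rV[F]_(d - k + 1)) (r : randT) : (Mmat s r)^T = Mmat s r.
Proof.
apply/matrixP => i j; rewrite !mxE.
case: (ltngtP i j) => h //.
by have -> : i = j by apply: val_inj.
Qed.
End Lin.

Section Constr.
Variables (F : finFieldType) (n k d : nat) (alpha : 'I_n -> F) (J : {set 'I_n}).
Hypotheses (Hk : (1 <= k)%N) (Hkd : (k <= d)%N) (HJ : (#|J| <= k - 1)%N)
  (Halpha0 : forall i, alpha i != 0).
Variable s : 'rV[F]_(d - k + 1).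

Definition Pp : {poly F} := \prod_(x <- [seq alpha j | j <- enum J]) ('X - x%:P).

Lemma size_Pp : size Pp = #|J|.+1.
Proof. by rewrite size_prod_XsubC size_map -cardE. Qed.

Lemma Pp_neq0 : Pp != 0.
Proof. by rewrite -size_poly_eq0 size_Pp. Qed.

Lemma Pp_big b : (k <= b)%N -> Pp`_b = 0.
Proof. move=> hb; apply: nth_default; rewrite size_Pp; lia. Qed.

Lemma Pp_root j : j \in J -> Pp.[alpha j] = 0.
Proof.
move=> hj; apply/eqP; rewrite -/(root _ _) root_prod_XsubC.
by apply: map_f; rewrite mem_enum.
Qed.

Definition p0 := Pp`_0.

Lemma p0_neq0 : p0 != 0.
Proof.
rewrite /p0 -horner_coef0 horner_prod prodf_seq_neq0.
apply/allP => x /mapP [j _ ->] /=; rewrite !hornerE.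
rewrite oppr_eq0.
exact: Halpha0.
Qed.

Definition Tp : {poly F} := \poly_(i < d) (if (k <= i)%N then mget s 0 (i - k) / p0 else 0).
Definition Ap : {poly F} := Tp %/ Pp * Pp.

Lemma Ap_root j : j \in J -> Ap.[alpha j] = 0.
Proof. by move=> hj; rewrite /Ap hornerM Pp_root // mulr0. Qed.

Lemma ApE : Ap = Tp - Tp %% Pp.
Proof. by rewrite {1}(Pdiv.Field.divp_eq Tp Pp) addrK. Qed.

Lemma size_mod : (size (Tp %% Pp)%R <= k - 1)%N.
Proof. have := ltn_modp Tp Pp; rewrite Pp_neq0 size_Pp; lia. Qed.

Lemma Ap_coef b : (k <= b)%N -> Ap`_b = Tp`_b.
Proof.
move=> hb; rewrite ApE coefB (nth_default 0 (s := Tp %% Pp)) ?subr0 //.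
apply: leq_trans size_mod _; lia.
Qed.

Lemma size_Ap : (size Ap <= d)%N.
Proof.
rewrite ApE; apply: leq_trans (size_polyD _ _) _; rewrite size_polyN geq_max size_poly /=.
apply: leq_trans size_mod _; lia.

Qed.

Lemma size_Pp_d : (size Pp <= d)%N.
Proof. rewrite size_Pp; lia. Qed.

Definition cc := (mget s 0 (d - k) - 2%:R * Ap`_0 * p0) / (p0 ^+ 2).
Definition ff a b := Ap`_a * Pp`_b + Pp`_a * Ap`_b + cc * Pp`_a * Pp`_b.

Definition r0 : 'cV[F]_(k - 1) * 'M[F]_(k - 1) * 'M[F]_(d - k, k - 1) :=
  (\col_(i < k - 1) ff 0 i.+1, \matrix_(i < k - 1, j < k - 1) ff i.+1 j.+1,
   \matrix_(i < d - k, j < k - 1) ff (i + k) j.+1).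

Lemma ff_sym a b : ff a b = ff b a.
Proof. rewrite /ff; ring. Qed.

Lemma ff00 : ff 0 0 = mget s 0 (d - k).
Proof. rewrite /ff /cc -/p0; have := p0_neq0; move=> h; field; exact: h. Qed.

Lemma ff0b b : (k <= b)%N -> (b < d)%N -> ff 0 b = mget s 0 (b - k).
Proof.
move=> h1 h2; rewrite /ff -/p0 (Pp_big h1) (Ap_coef h1) /Tp coef_poly h2 h1.
have := p0_neq0 => h; field; exact: h.
Qed.

Lemma ffbig a b : (k <= a)%N -> (k <= b)%N -> ff a b = 0.
Proof. by move=> ha hb; rewrite /ff (Pp_big ha) (Pp_big hb) !mulr0 !mul0r !addr0. Qed.

Lemma Mupper_r0 i j : (i <= j)%N -> (j < d)%N -> Mupper s r0 i j = ff i j.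
Proof.
move=> hij hj; rewrite /Mupper /r0.
case: eqP => [hi0|hi0].
  rewrite hi0.
  case: eqP => [hj0|hj0]; first by rewrite hj0 ff00.
  case: ifP => hjk.
    have h1 : (j.-1 < k - 1)%N by lia.
    rewrite (mget_in _ h1 (ltn0Sn 0)) mxE; congr ff; rewrite /=; lia.
  rewrite ff0b //; lia.
case: ifP => hik.
  case: ifP => hjk.
    have h1 : (i.-1 < k - 1)%N by lia.
    have h2 : (j.-1 < k - 1)%N by lia.
    rewrite (mget_in _ h1 h2) mxE; congr ff; rewrite /=; lia.
  have h1 : (j - k < d - k)%N by lia.
  have h2 : (i.-1 < k - 1)%N by lia.
  rewrite (mget_in _ h1 h2) mxE ff_sym; congr ff; rewrite /=; lia.
rewrite ffbig //; lia.
Qed.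

Lemma Mmat_r0 : Mmat s r0 = \matrix_(a < d, b < d) ff a b.
Proof.
apply/matrixP => i j; rewrite /Mmat [LHS]mxE [RHS]mxE; case: ifP => h.
  by rewrite Mupper_r0.
rewrite Mupper_r0 1?ff_sym //; lia.
Qed.

Lemma row_kill j : j \in J -> (psi d alpha j)^T *m Mmat s r0 = 0.
Proof.
move=> hjJ; apply/matrixP => z b; rewrite Mmat_r0 !mxE.
under eq_bigr => a _ do rewrite !mxE.
have hA := horner_coef_wide (alpha j) size_Ap; rewrite Ap_root // in hA.
have hP := horner_coef_wide (alpha j) size_Pp_d; rewrite Pp_root // in hP.
rewrite (eq_bigr (fun a : 'I_d => (Ap`_a * alpha j ^+ a) * Pp`_b + (Pp`_a * alpha j ^+ a) * Ap`_b
   + cc * (Pp`_a * alpha j ^+ a) * Pp`_b)); last by move=> a _; rewrite /ff; ring.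
rewrite !big_split /= -!mulr_suml -mulr_sumr -hA -hP; ring.
Qed.
End Constr.

Section Proto.
Variables (F : finFieldType) (n k d : nat) (alpha : 'I_n -> F) (G : rel (option 'I_n)).
Hypothesis Halpha : injective alpha.

Notation st := (state F n d).
Notation ps := (psi d alpha).
Notation ent := (option 'I_n * payload F d)%type.
Notation randT := ('cV[F]_(k - 1) * 'M[F]_(k - 1) * 'M[F]_(d - k, k - 1))%type.
Notation secT := 'rV[F]_(d - k + 1).

Definition val (M : 'M[F]_d) (a b : 'I_n) : F := ((ps a)^T *m M *m ps b) 0 0.

Definition good (M : 'M[F]_d) (b : 'I_n) (e : ent) : bool :=
  match e with
  | (None, inl w) => w == (ps b)^T *m M
  | (Some a, inr x) => x == val M a b
  | _ => false
  end.

Definition tagE (e : ent) : option 'I_n * bool :=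
  (e.1, if e.2 is inl _ then true else false).

Definition senders (l : seq ent) := map fst (scalars_of l).

Lemma tags_senders (l1 l2 : seq ent) :
  map tagE l1 = map tagE l2 -> senders l1 = senders l2.
Proof.
elim: l1 l2 => [|[o1 p1] l1 IH] [|[o2 p2] l2] //= [eo ep] /IH.
rewrite /senders /scalars_of /= => IH'.
case: o1 o2 eo => [a1|] [a2|] //.
  by case=> <-; case: p1 p2 ep => ? [] ? //= _; rewrite IH'.
all: try by move=> _; case: p1 p2 ep => ? [] ? //= _.
Qed.

Lemma tags_dvec (l1 l2 : seq ent) :
  map tagE l1 = map tagE l2 -> isSome (dvec_of l1) = isSome (dvec_of l2).
Proof.
elim: l1 l2 => [|[o1 p1] l1 IH] [|[o2 p2] l2] //= [eo ep] /IH.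
rewrite /dvec_of /= => IH'.
case: o1 o2 eo => [a1|] [a2|] // _; case: p1 p2 ep => ? [] ? //= _.
Qed.

Lemma scalars_rcons_d (l : seq ent) w : scalars_of (rcons l (None, inl w)) = scalars_of l.
Proof. by rewrite /scalars_of -cats1 pmap_cat /= cats0. Qed.

Lemma scalars_rcons_s (l : seq ent) a x :
  scalars_of (rcons l (Some a, inr x)) = rcons (scalars_of l) (a, x).
Proof. by rewrite /scalars_of -cats1 pmap_cat /= cats1. Qed.

Definition Sim (s1 s2 : st) : Prop :=
  [/\ ddel s1 = ddel s2, del s1 = del s2, fired s1 = fired s2,
      (forall a b, isSome (msg s1 a b) = isSome (msg s2 a b)) &
      (forall b, map tagE (recv s1 b) = map tagE (recv s2 b))].

Lemma react_sim s1 s2 b : Sim s1 s2 -> Sim (react alpha G s1 b) (react alpha G s2 b).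
Proof.
case=> Hdd Hdl Hf Hm Hr; rewrite /react -Hf.
case: (fired s1 b) => //.
have Hs := tags_senders (Hr b); have Hd := tags_dvec (Hr b).
case: (inND G b).
  case: (dvec_of (recv s1 b)) Hd => [w1|]; case: (dvec_of (recv s2 b)) => [w2|] //= _.
  split => //=.
  by move=> a j; case: ifP.
have -> : size (scalars_of (recv s1 b)) = size (scalars_of (recv s2 b)).
  by rewrite -(size_map fst) -[RHS](size_map fst); congr size.
case: ifP => _ //.
split => //=.
by move=> a j; rewrite /senders in Hs; rewrite Hs; case: ifP.
Qed.

Lemma step_sim (s1 s2 : secT) (r1 r2 : randT) (t1 t2 : st) ev :
  Sim t1 t2 -> Sim (step alpha G s1 r1 t1 ev) (step alpha G s2 r2 t2 ev).
Proof.
move=> HS; have HS' := HS; case: HS' => Hdd Hdl Hf Hm Hr.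
case: ev => [[a|] dst] /=.
  have := Hm a dst.
  case: (msg t1 a dst) => [x1|]; case: (msg t2 a dst) => [x2|] //= _.
  rewrite -Hdl; case: ifP => _ //.
  apply: react_sim; split => //=.
  by move=> j; case: ifP => _; rewrite ?map_rcons Hr.
rewrite -Hdd; case: ifP => _ //.
apply: react_sim; split => //=.
by move=> j; case: ifP => _; rewrite ?map_rcons Hr.
Qed.

Lemma foldl_sim (s1 s2 : secT) (r1 r2 : randT) sched (t1 t2 : st) :
  Sim t1 t2 -> Sim (foldl (step alpha G s1 r1) t1 sched) (foldl (step alpha G s2 r2) t2 sched).
Proof.
elim: sched t1 t2 => [|ev sc IH] t1 t2 //= HS.
by apply: IH; apply: step_sim.
Qed.


Definition Inv (M : 'M[F]_d) (t : st) : Prop :=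
  [/\ (forall a b x, msg t a b = Some x -> x = val M a b),
      (forall b, all (good M b) (recv t b)),
      (forall b, uniq (senders (recv t b))) &
      (forall a b, a \in senders (recv t b) -> del t a b)].

Lemma dvec_good M b (l : seq ent) w :
  all (good M b) l -> dvec_of l = Some w -> w = (ps b)^T *m M.
Proof.
elim: l => [|[[a|] [w'|x]] l IH] //=; rewrite /dvec_of /=.
all: try by case/andP => _ /IH; apply.
all: by case/andP => /eqP -> _ [<-].
Qed.

Lemma scalars_good M b (l : seq ent) p :
  all (good M b) l -> p \in scalars_of l -> p.2 = val M p.1 b.
Proof.
elim: l => [|[[a|] [w'|x]] l IH] //=; rewrite /scalars_of /=.
all: try by case/andP => _ /IH; apply.
case/andP => /eqP hx /IH hl.
rewrite inE => /orP [/eqP hp|].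
by rewrite hp.
exact: hl.
Qed.

Lemma reconstruct_good M b (l : seq ent) :
  all (good M b) l -> uniq (senders l) -> (d <= size (scalars_of l))%N ->
  reconstruct alpha l = M *m ps b.
Proof.
move=> Hg Hu Hd; rewrite /reconstruct.
set S := take d (scalars_of l).
have hS : size S = d by rewrite size_take_min; apply/minn_idPl.
pose x0 := (b, 0 : F).
have hnth (t : 'I_d) : nth None (map Some S) t = Some (nth x0 S t).
  by rewrite (nth_map x0) // hS.
pose V' := \matrix_(t < d, c < d) alpha (nth x0 S t).1 ^+ c.
match goal with |- invmx ?V0 *m ?sg0 = _ => set V := V0; set sig := sg0 end.
have eV : V = V' by apply/matrixP => i0 c0; rewrite /V /V' !mxE hnth; case: (nth x0 S i0).
have es : sig = V' *m (M *m ps b).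
  apply/matrixP => i0 z; rewrite (ord1 z) /sig mxE hnth /=.
  have hin : nth x0 S i0 \in scalars_of l.
    by apply: (mem_take (s := scalars_of l) (n0 := d)); rewrite -/S mem_nth // hS.
  rewrite /V' {1}(surjective_pairing (nth x0 S i0)) /=.
  rewrite (scalars_good Hg hin) /val -mulmxA !mxE.
  by apply: eq_bigr => c _; rewrite !mxE.
have hu : uniq (map fst S) by rewrite /S map_take; apply: take_uniq.
have Vu : V' \in unitmx.
  have -> : V' = (Vandermonde d (\row_t alpha (nth x0 S t).1))^T.
    by apply/matrixP => i0 c0; rewrite !mxE.
  rewrite unitmx_tr unitmxE det_Vandermonde unitfE.
  apply/prodf_neq0 => i _; apply/prodf_neq0 => j hij; rewrite !mxE subr_eq0.
  apply/negP => /eqP /Halpha.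
  rewrite -!(nth_map x0 b fst) ?hS // => /eqP.
  rewrite nth_uniq ?size_map ?hS // => /eqP /val_inj hji.
  by rewrite hji ltnn in hij.
by rewrite eV es mulKmx.
Qed.

Lemma react_inv M (t : st) b : M^T = M -> Inv M t -> Inv M (react alpha G t b).
Proof.
move=> HM [I1 I2 I3 I4]; rewrite /react.
case: (fired t b) => //.
case: (inND G b).
  case E: (dvec_of (recv t b)) => [w|] //; split => //= a j x.
  case: ifP => [/andP [/eqP -> _] [<-]|_]; last exact: I1.
  by rewrite (dvec_good (I2 b) E) /val.
case: ifP => hd //; split => //= a i x.
case: ifP => [/and3P [/eqP -> _ _] [<-]|_]; last exact: I1.
by rewrite (reconstruct_good (I2 b) (I3 b) hd) trmx_mul HM /val.
Qed.

Lemma step_inv (s : secT) (r : randT) (t : st) ev :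
  Inv (Mmat s r) t -> Inv (Mmat s r) (step alpha G s r t ev).
Proof.
move=> HI; have HI' := HI; case: HI' => I1 I2 I3 I4.
have HM := Mmat_sym s r.
case: ev => [[a|] dst] /=.
  case E: (msg t a dst) => [x|] //.
  case: ifP => hdl //.
  apply: react_inv => //; split => //=.
  - move=> j; case: eqP => [->|_]; last exact: I2.
    by rewrite all_rcons I2 andbT /= (I1 _ _ _ E).
  - move=> j; case: eqP => [->|_]; last exact: I3.
    rewrite /senders scalars_rcons_s map_rcons rcons_uniq I3 andbT.
    by apply/negP => /I4 h; move: hdl; rewrite h.
  - move=> a' j; case: eqP => [->|hj].
      rewrite /senders scalars_rcons_s map_rcons mem_rcons inE.
      by case/orP => [/eqP ->|/I4 ->]; rewrite ?eqxx ?orbT.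
    by move/I4 ->; rewrite orbT.
case: ifP => _ //.
apply: react_inv => //; split => //=.
- move=> j; case: eqP => [->|_]; last exact: I2.
  by rewrite all_rcons I2 andbT /=.
- move=> j; case: eqP => [->|_]; last exact: I3.
  by rewrite /senders scalars_rcons_d I3.
- move=> a' j; case: eqP => [->|_]; last exact: I4.
  by rewrite /senders scalars_rcons_d; apply: I4.
Qed.

Lemma foldl_inv (s : secT) (r : randT) sched (t : st) :
  Inv (Mmat s r) t -> Inv (Mmat s r) (foldl (step alpha G s r) t sched).
Proof.
elim: sched t => [|ev sc IH] t //= HI.
by apply: IH; apply: step_inv.
Qed.

Lemma init_inv M : Inv M (init_state F n d).
Proof. by split. Qed.

Lemma init_sim : Sim (init_state F n d) (init_state F n d).
Proof. by split. Qed.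

Lemma val_sym M a b : M^T = M -> val M a b = ((ps b)^T *m M *m ps a) 0 0.
Proof.
move=> HM; rewrite /val.
have h (X : 'M[F]_1) : X 0 0 = X^T 0 0 by rewrite mxE.
rewrite [LHS]h.
by rewrite !trmx_mul trmxK HM mulmxA.
Qed.

Lemma recv_eq M1 M2 j (l1 l2 : seq ent) :
  M1^T = M1 -> M2^T = M2 -> (ps j)^T *m M1 = (ps j)^T *m M2 ->
  map tagE l1 = map tagE l2 -> all (good M1 j) l1 -> all (good M2 j) l2 -> l1 = l2.
Proof.
move=> H1 H2 Hrow.
elim: l1 l2 => [|[o1 p1] l1 IH] [|[o2 p2] l2] //= [eo ep] /IH {}IH.
case/andP => g1 /IH {}IH /andP [g2 /IH ->]; congr cons.
move: eo ep g1 g2 => /= <-.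
case: o1 => [a|]; case: p1 => [w1|x1]; case: p2 => [w2|x2] //= _.
  by move=> /eqP -> /eqP ->; rewrite (val_sym _ _ H1) (val_sym _ _ H2) Hrow.
by move=> /eqP -> /eqP ->; rewrite Hrow.
Qed.

Lemma view_eq (J : {set 'I_n}) (s1 s2 : secT) (r1 r2 : randT) sched :
  (forall j, j \in J -> (ps j)^T *m Mmat s1 r1 = (ps j)^T *m Mmat s2 r2) ->
  view alpha G J s1 r1 sched = view alpha G J s2 r2 sched.
Proof.
move=> Hrow; rewrite /view /run.
have [_ _ _ _ Hr] := foldl_sim s1 s2 r1 r2 sched init_sim.
have [_ Hg1 _ _] := foldl_inv sched (init_inv (Mmat s1 r1)).
have [_ Hg2 _ _] := foldl_inv sched (init_inv (Mmat s2 r2)).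
apply/eq_in_map => j; rewrite mem_enum => hj.
exact: (recv_eq (Mmat_sym s1 r1) (Mmat_sym s2 r2) (Hrow j hj) (Hr j) (Hg1 j) (Hg2 j)).
Qed.

End Proto.

Unset Implicit Arguments.
Theorem theorem3 (F : finFieldType) (n k d : nat) (alpha : 'I_n -> F)
  (Hk : (2 <= k)%N) (Hkn : (k <= n)%N) (Hkd : (k <= d)%N) (Hq : (n < #|F|)%N)
  (Halpha : injective alpha) (Halpha0 : forall i, alpha i != 0)
  (G : rel (option 'I_n)) (HG : irreflexive G)
  (J : {set 'I_n}) (HJ : (#|J| <= k - 1)%N) :
  (forall (sched : seq (option 'I_n * 'I_n)) (s1 s2 : 'rV[F]_(d - k + 1)) v,
     #|[set r : 'cV[F]_(k - 1) * 'M[F]_(k - 1) * 'M[F]_(d - k, k - 1)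
          | view alpha G J s1 r sched == v]|
     = #|[set r : 'cV[F]_(k - 1) * 'M[F]_(k - 1) * 'M[F]_(d - k, k - 1)
          | view alpha G J s2 r sched == v]|)
  /\
  (forall (s1 s2 : 'rV[F]_(d - k + 1)) (w : seq 'rV[F]_d),
     #|[set r : 'cV[F]_(k - 1) * 'M[F]_(k - 1) * 'M[F]_(d - k, k - 1)
          | share_view alpha J s1 r == w]|
     = #|[set r : 'cV[F]_(k - 1) * 'M[F]_(k - 1) * 'M[F]_(d - k, k - 1)
          | share_view alpha J s2 r == w]|).
Proof.
have Hk1 : (1 <= k)%N by apply: leq_trans Hk.
have key : forall (s1 s2 : 'rV[F]_(d - k + 1)) r j, j \in J ->
    (psi d alpha j)^T *m Mmat s1 r
    = (psi d alpha j)^T *m Mmat s2 (r - r0 alpha J (s1 - s2)).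
  move=> s1 s2 r j hj.
  have -> : Mmat s1 r = Mmat (s2 + (s1 - s2)) ((r - r0 alpha J (s1 - s2)) + r0 alpha J (s1 - s2)).
    by rewrite subrK addrC subrK.
  by rewrite Mmat_add mulmxDr (row_kill Hk1 Hkd HJ Halpha0 _ hj) addr0.
have inj : forall r1 : 'cV[F]_(k - 1) * 'M[F]_(k - 1) * 'M[F]_(d - k, k - 1),
    injective (fun r => r - r1).
  by move=> r1 x y /(congr1 (fun z => z + r1)); rewrite !subrK.
split.
  move=> sched s1 s2 v.
  rewrite -(card_preimset _ (inj (r0 alpha J (s2 - s1)))).
  apply: eq_card => r; rewrite !inE.
  by rewrite (view_eq G Halpha sched (key s2 s1 r)).
move=> s1 s2 w.
rewrite -(card_preimset _ (inj (r0 alpha J (s2 - s1)))).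
apply: eq_card => r; rewrite !inE /share_view.
suff -> : [seq (psi d alpha j)^T *m Mmat s2 r | j <- enum J] =
          [seq (psi d alpha j)^T *m Mmat s1 (r - r0 alpha J (s2 - s1)) | j <- enum J] by [].
by apply/eq_in_map => j; rewrite mem_enum => hj; apply: key.
Qed.
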